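(* Let $(M,A)$ be a $d$-dimensional BUT-manifold. Suppose $M$ is covered by a family $\mathcal F$ of $d+2$ closed subsets $C_1,\ldots,C_{d+2}$ such that $C_i\cap A(C_i)=\emptyset$ for all $i$. Let $0<k<d+2$. Then any $k$ of the subsets in $\mathcal F$ have nonempty intersection, and moreover there is a point $x$ in this intersection such that $A(x)$ belongs to the intersection of the remaining $d+2-k$ subsets of $\mathcal F$.
   Context: A BUT (Borsuk–Ulam type) manifold is a pair $(M,A)$ where $M$ is a connected compact piecewise-linear $d$-dimensional manifold without boundary and $A:M\to M$ is a free simplicial involution ($A(A(x))=x$, $A(x)\neq x$), such that for every continuous $g:M\to\mathbb{R}^d$ there is $x\in M$ with $g(A(x))=g(x)$. *)

(* Defs.v *)
(* PL manifolds are modelled as compact polyhedra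
   embedded in some Euclidean space 'rV[R]_n. *)
From HB Require Import structures.
From mathcomp Require Import all_boot all_order all_algebra.
From mathcomp Require Import all_classical all_reals all_analysis.
Set Implicit Arguments. Unset Strict Implicit. Unset Printing Implicit Defensive.
Import Order.TTheory GRing.Theory Num.Theory.
Import numFieldNormedType.Exports.
Local Open Scope classical_set_scope.
Local Open Scope ring_scope.

Section Defs.
Variable R : realType.

Definition conv_hull (n : nat) (P : seq 'rV[R]_n) : set 'rV[R]_n :=
  [set x | exists w : 'I_(size P) -> R,
     (forall i, 0 <= w i) /\ \sum_i w i = 1 /\ x = \sum_i w i *: nth 0 P i].

Definition affine_on (n m : nat) (S : set 'rV[R]_n) (f : 'rV[R]_n -> 'rV[R]_m) :=
  forall x y (t : R), S x -> S y -> 0 <= t -> t <= 1 ->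
    f (t *: x + (1 - t) *: y) = t *: f x + (1 - t) *: f y.

Definition PL_on (n m : nat) (N : set 'rV[R]_n) (f : 'rV[R]_n -> 'rV[R]_m) :=
  exists cells : seq (seq 'rV[R]_n),
    N = \bigcup_(c in [set c | c \in cells]) conv_hull c /\
    forall c, c \in cells -> affine_on (conv_hull c) f.

Definition cube (d : nat) : set 'rV[R]_d :=
  [set z | forall j, -1 <= z ord0 j <= 1].
Arguments cube d : clear implicits.

Definition PL_manifold (d n : nat) (M : set 'rV[R]_n) :=
  forall x, M x -> exists (N : set 'rV[R]_n) (h : 'rV[R]_n -> 'rV[R]_d)
                          (g : 'rV[R]_d -> 'rV[R]_n),
    [/\ N `<=` M,
        (exists r : R, 0 < r /\ (M `&` ball x r) `<=` N),
        PL_on N h /\ PL_on (cube d) g,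
        [/\ forall y, N y -> cube d (h y), forall z, cube d z -> N (g z),
            forall y, N y -> g (h y) = y & forall z, cube d z -> h (g z) = z]
      & h x = 0].

Definition face_real (n m : nat) (v : 'I_m -> 'rV[R]_n) (s : {set 'I_m}) :
  set 'rV[R]_n :=
  [set x | exists w : 'I_m -> R,
     [/\ forall i, 0 <= w i, forall i, i \notin s -> w i = 0,
         \sum_i w i = 1 & x = \sum_i w i *: v i]].

Definition aff_indep (n m : nat) (v : 'I_m -> 'rV[R]_n) (s : {set 'I_m}) :=
  forall w : 'I_m -> R, (forall i, i \notin s -> w i = 0) ->
    \sum_i w i = 0 -> \sum_i w i *: v i = 0 -> forall i, w i = 0.

Definition triangulates (n m : nat) (M : set 'rV[R]_n)
  (v : 'I_m -> 'rV[R]_n) (S : {set {set 'I_m}}) :=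
  [/\ injective v /\ (forall s, s \in S -> (0 < #|s|)%N),
      forall s t : {set 'I_m}, s \in S -> t \subset s -> (0 < #|t|)%N -> t \in S,
      forall s, s \in S -> aff_indep v s,
      forall s t : {set 'I_m}, s \in S -> t \in S ->
        face_real v s `&` face_real v t = face_real v (s :&: t)
    & M = \bigcup_(s in [set s | s \in S]) face_real v s].

Definition simplicial_on (n : nat) (M : set 'rV[R]_n) (A : 'rV[R]_n -> 'rV[R]_n) :=
  exists (m : nat) (v : 'I_m -> 'rV[R]_n) (S : {set {set 'I_m}}) (sigma : 'I_m -> 'I_m),
    [/\ triangulates M v S,
        forall s, s \in S -> sigma @: s \in S
      & forall w : 'I_m -> R,
          (exists2 s, s \in S & forall i, i \notin s -> w i = 0) ->
          (forall i, 0 <= w i) -> \sum_i w i = 1 ->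
          A (\sum_i w i *: v i) = \sum_i w i *: v (sigma i)].

Definition free_involution_on (n : nat) (M : set 'rV[R]_n) (A : 'rV[R]_n -> 'rV[R]_n) :=
  forall x, M x -> [/\ M (A x), A (A x) = x & A x <> x].

Definition BU_property (d n : nat) (M : set 'rV[R]_n) (A : 'rV[R]_n -> 'rV[R]_n) :=
  forall g : 'rV[R]_n -> 'rV[R]_d, {within M, continuous g} ->
    exists x, M x /\ g (A x) = g x.

Definition BUT_manifold (d n : nat) (M : set 'rV[R]_n) (A : 'rV[R]_n -> 'rV[R]_n) :=
  [/\ compact M /\ connected M, PL_manifold d M,
      free_involution_on M A, simplicial_on M A & BU_property d M A].

End Defs.

(* Main.v *)
Require Import Defs.
From HB Require Import structures.
From mathcomp Require Import all_boot all_order all_algebra.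
From mathcomp Require Import all_classical all_reals all_analysis.
From mathcomp Require Import ring lra zify.
Set Implicit Arguments. Unset Strict Implicit. Unset Printing Implicit Defensive.
Import Order.TTheory GRing.Theory Num.Theory.
Import numFieldNormedType.Exports.
Local Open Scope classical_set_scope.
Local Open Scope ring_scope.

Section Aux.
Variable R : realType.

Lemma cont_sum (T : topologicalType) (V : normedModType R) (I : Type) (s : seq I)
  (F : I -> T -> V) x :
  (forall i, {for x, continuous (F i)}) ->
  {for x, continuous (fun t => \sum_(i <- s) F i t)}.
Proof.
move=> hF; elim: s => [|a s IH].
  rewrite (_ : (fun t => _) = fun _ => 0); last by apply/funext => t; rewrite big_nil.
  exact: cst_continuous.
rewrite (_ : (fun t => _) = F a + (fun t => \sum_(i <- s) F i t)); last first.
  by apply/funext => t; rewrite big_cons.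
exact: (continuousD (hF a) IH).
Qed.

Definition Wf n m (u : 'I_m -> 'rV[R]_n) (w : 'rV[R]_m) := \sum_i w ord0 i *: u i.

Lemma Wf_cont n m (u : 'I_m -> 'rV[R]_n) : continuous (Wf u).
Proof.
move=> w; apply: cont_sum => i.
apply: continuousZr_tmp; exact: coord_continuous.
Qed.

Definition Pc m (s : {set 'I_m}) (i : 'I_m) : set R :=
  if i \in s then [set x | 0 <= x] else [set 0].

Definition Dl m (s : {set 'I_m}) : set 'rV[R]_m :=
  [set w | forall i, Pc s i (w ord0 i)] `&` [set w | \sum_i w ord0 i = 1].

Lemma closed_coords m (P : 'I_m -> set R) : (forall i, closed (P i)) ->
  closed [set w : 'rV[R]_m | forall i, P i (w ord0 i)].
Proof.
move=> hP.
rewrite (_ : [set w | _] = \bigcap_(i in setT) ((fun w : 'rV[R]_m => w ord0 i) @^-1` P i)).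
  apply: closed_bigI => i _.
  by move: (@coord_continuous R 1 m ord0 i) => /continuous_closedP; apply.
by apply/seteqP; split => w /= H i; [move=> _; exact: H | exact: H].
Qed.

Lemma Dl_compact m (s : {set 'I_m}) : compact (Dl s).
Proof.
apply: (@subclosed_compact _ _ [set v : 'rV[R]_m | forall i, `[0, 1]%classic (v ord0 i)]).
- apply: closedI.
    apply: closed_coords => i; rewrite /Pc; case: (i \in s).
      exact: closed_ge.
    exact: closed_eq.
  have hc : continuous (fun w : 'rV[R]_m => \sum_i w ord0 i).
    by move=> w; apply: cont_sum => i; exact: coord_continuous.
  by move: hc => /continuous_closedP /(_ [set x : R | x = 1] (@closed_eq R 1)).
- by have H := (@rV_compact R m (fun=> `[0, 1]%classic) (fun=> @segment_compact R 0 1)); exact: H.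
- move=> w [/= H1 H2] i.
  have h0 : forall j, 0 <= w ord0 j.
    by move=> j; move: (H1 j); rewrite /Pc; case: (j \in s) => // ->.
  rewrite /= in_itv /= h0 /=.
  rewrite -H2 (bigD1 i) //= lerDl.
  by apply: sumr_ge0 => j _; exact: h0.
Qed.

Lemma simplicial_cont n (M : set 'rV[R]_n) (A : 'rV[R]_n -> 'rV[R]_n) :
  simplicial_on M A -> {within M, continuous A}.
Proof.
case=> m [v [S [sigma [[[vinj Spos] Sdown Sind Sint MU] Ssig Aform]]]].
pose Dt := \big[setU/set0]_(s <- enum S) Dl s.
have DtP : forall w, Dt w <-> exists2 s, s \in S & Dl s w.
  move=> w; rewrite /Dt -bigcup_seq; split.
    by case=> s /= sS Dw; exists s => //; rewrite -mem_enum.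
  by case=> s sS Dw; exists s => //=; rewrite mem_enum.
have Dtc : compact Dt by apply: bigsetU_compact => s _; exact: Dl_compact.
have key : forall w, Dt w -> M (Wf v w) /\ A (Wf v w) = Wf (v \o sigma) w.
  move=> w /DtP [s sS [/= H1 H2]].
  have h0 : forall j, 0 <= w ord0 j.
    by move=> j; move: (H1 j); rewrite /Pc; case: (j \in s) => // ->.
  have hs : forall j, j \notin s -> w ord0 j = 0.
    by move=> j; move: (H1 j); rewrite /Pc; case: (j \in s).
  split.
    rewrite MU; exists s => //; exists (fun j => w ord0 j); split => //.
  apply: Aform => //; exists s => //.
apply/continuous_closedP => Z cZ; apply/closed_subspaceP.
exists (Wf v @` (Dt `&` Wf (v \o sigma) @^-1` Z)).
  apply: compact_closed; first exact: norm_hausdorff.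
  apply: continuous_compact.
    apply: continuous_subspaceT; exact: Wf_cont.
  apply: compact_closedI => //.
  by move: (@Wf_cont _ _ (v \o sigma)) => /continuous_closedP; apply.
apply/seteqP; split => y.
  case=> [[w [Dw Zw] <-] _].
  have [Mw Aw] := key w Dw; split => //=; change (Z (A (Wf v w))); by rewrite Aw.
case=> /= Zy My.
have : (\bigcup_(s in [set` S]) face_real v s) y by rewrite -MU.
case=> s /= sS [w' [h0 hs h1 yE]].
pose w := \row_j w' j.
have Dw : Dt w.
  apply/DtP; exists s => //; split => /=.
    move=> j; rewrite /Pc mxE; case: ifP => js //=.
    by apply: hs; rewrite js.
  by under eq_bigr do rewrite mxE.
have ey : Wf v w = \sum_i w' i *: v i.
  by rewrite /Wf; under eq_bigr do rewrite mxE.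
split => //; exists w; last by rewrite ey.
split => //=; rewrite /preimage /=.
have [_ <-] := key w Dw; rewrite ey -yE; exact: Zy.
Qed.

End Aux.
Section Dist.
Variable R : realType.
Variable n : nat.
Variable C : set 'rV[R]_n.

Definition dC (z : 'rV[R]_n) : R := fine (edist_inf C z).

Hypothesis Cne : C !=set0.

Lemma edist_inf_fin z : edist_inf C z \is a fin_num.
Proof.
case: Cne => c Cc.
rewrite ge0_fin_numE ?edist_inf_ge0 //.
apply: (@le_lt_trans _ _ (edist (z, c))).
  by apply: ereal_inf_lbound; exists c.
have : edist (z, c) \is a fin_num.
  apply/edist_finP; exists (`|z - c| + 1); first by rewrite ltr_pwDr // ltr01.
  by rewrite -ball_normE /= ltrDl ltr01.
by rewrite ge0_fin_numE ?edist_ge0.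
Qed.

Lemma dC_cont : continuous dC.
Proof.
move=> z.
have h : edist_inf C @ z --> (dC z)%:E.
  rewrite /dC fineK ?edist_inf_fin //; exact: edist_inf_continuous.
exact: (fine_cvg h).
Qed.

Lemma dC_ge0 z : 0 <= dC z.
Proof. by rewrite /dC fine_ge0 // edist_inf_ge0. Qed.

Lemma dC0 z : C z -> dC z = 0.
Proof. by move=> Cz; rewrite /dC edist_inf0. Qed.

Lemma dC0P z : closed C -> dC z = 0 -> C z.
Proof.
move=> cC dz; have e0 : edist_inf C z = 0%E.
  by rewrite -[edist_inf C z]fineK ?edist_inf_fin // -/(dC z) dz.
apply: cC => B /nbhs_ballP [e epos hB].
have [_ [a Ca <-] lt] := lb_ereal_inf_adherent epos (edist_inf_fin z).
exists a; split => //; apply: hB.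
apply: (@edist_lt_ball _ _ _ (z, a)).
move: lt; rewrite /edist_inf in e0 *; by rewrite e0 add0e.
Qed.

End Dist.

Section Main.
Variable R : realType.

Lemma row_cont (T : topologicalType) d (f : 'I_d -> T -> R) x :
  (forall j, {for x, continuous (f j)}) ->
  {for x, continuous (fun y => \row_j f j y : 'rV[R]_d)}.
Proof.
move=> hf.
rewrite (_ : (fun y => _) = fun y => \sum_(j < d) f j y *: (delta_mx ord0 j : 'rV[R]_d)).
  by apply: cont_sum => j; apply: continuousZr_tmp; exact: hf.
apply/funext => y; apply/rowP => k; rewrite mxE summxE.
rewrite (bigD1 k) //= big1 ?addr0.
  by rewrite mxE mxE !eqxx mulr1.
by move=> j jk; rewrite !mxE eqxx /= eq_sym (negbTE jk) mulr0.
Qed.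

End Main.

Lemma phi_inv (T : Type) (R : realFieldType) (A : T -> T) (f : T -> R) y :
  A (A y) = y -> f y + f (A y) != 0 ->
  f (A y) / (f (A y) + f (A (A y))) = 1 - f y / (f y + f (A y)).
Proof.
move=> AAy hp; rewrite AAy (addrC (f (A y))).
by rewrite -[X in X - _](divff hp) -mulrBl addrC addrK.
Qed.

Lemma half_inv (R : realFieldType) : (2^-1 : R) = 1 - 2^-1.
Proof. by rewrite [X in X - _](splitr 1) div1r addrK. Qed.

Unset Implicit Arguments.

Theorem theorem4p2 (R : realType) (d n : nat) (M : set 'rV[R]_n)
  (A : 'rV[R]_n -> 'rV[R]_n) (C : 'I_d.+2 -> set 'rV[R]_n) :
  BUT_manifold d M A ->
  (forall i, closed (C i) /\ C i `<=` M) ->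
  (forall x, M x -> exists i, C i x) ->
  (forall i, C i `&` (A @` C i) = set0) ->
  forall K : {set 'I_d.+2}, (0 < #|K|)%N -> (#|K| < d.+2)%N ->
    exists x, [/\ M x, forall i, i \in K -> C i x
                     & forall i, i \notin K -> C i (A x)].
Proof.
move=> [[cM _] _ fi simp BU] hC cov disj K K0 Klt.
have Acont := simplicial_cont simp.
pose phi (i : 'I_d.+2) : 'rV[R]_n -> R :=
  if pselect (C i !=set0) then
    (fun y => dC (C i) y / (dC (C i) y + dC (C i) (A y)))
  else (fun _ => 2^-1).
have nboth : forall i y, C i y -> C i (A y) -> False.
  move=> i y Ciy CiAy.
  have : (C i `&` A @` C i) (A y) by split => //; exists y.
  by rewrite disj.
have den_pos : forall i y, C i !=set0 -> 0 < dC (C i) y + dC (C i) (A y).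
  move=> i y ne; rewrite lt0r addr_ge0 ?dC_ge0 // andbT.
  rewrite paddr_eq0 ?dC_ge0 //; apply/negP => /andP[/eqP h1 /eqP h2].
  by apply: (nboth i y); [exact: (dC0P ne (hC i).1 h1)|exact: (dC0P ne (hC i).1 h2)].
have phiA : forall i y, M y -> phi i (A y) = 1 - phi i y.
  move=> i y My; have [_ AAy _] := fi y My.
  rewrite /phi; case: pselect => ne /=.
    exact: (phi_inv AAy (lt0r_neq0 (den_pos i y ne))).
  exact: half_inv.
have phi0 : forall i y, C i y -> phi i y = 0.
  move=> i y Ciy; rewrite /phi; case: pselect => ne /=.
    by rewrite (dC0 Ciy) mul0r.
  by exfalso; apply: ne; exists y.
have phi0P : forall i y, phi i y = 0 -> C i y.
  move=> i y; rewrite /phi; case: pselect => ne /=.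
    move/eqP; rewrite mulf_eq0 invr_eq0 (negbTE (lt0r_neq0 (den_pos i y ne))) orbF.
    by move/eqP => h; exact: (dC0P ne (hC i).1 h).
  by move/eqP; rewrite invr_eq0 pnatr_eq0.
have phi1 : forall i y, M y -> C i (A y) -> phi i y = 1.
  move=> i y My CAy; have := phiA i y My; rewrite phi0 //.
  by move/eqP; rewrite eq_sym subr_eq0 => /eqP.
have phi1P : forall i y, M y -> phi i y = 1 -> C i (A y).
  move=> i y My h; apply: phi0P; by rewrite phiA // h subrr.
have phic : forall i, {within M, continuous (phi i)}.
  move=> i; rewrite /phi; case: pselect => ne; last first.
    by apply: continuous_subspaceT; exact: cst_continuous.
  have c1 : {within M, continuous (dC (C i))}.
    exact: (@continuous_subspaceT _ _ M _ (dC_cont ne)).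
  have c2 : {within M, continuous (dC (C i) \o A)}.
    exact: (@within_continuous_comp _ _ _ M A (dC (C i)) (fun y _ => @dC_cont _ _ _ ne y) Acont).
  rewrite continuous_subspace_in => y; rewrite inE => My.
  rewrite /=.
  apply: (@continuousM R (subspace M) (dC (C i)) (fun z => (dC (C i) z + dC (C i) (A z))^-1) y).
    exact: c1.
  apply: (@continuousV R (subspace M) (fun z => dC (C i) z + dC (C i) (A z)) y).
    by rewrite lt0r_neq0 // den_pos.
  apply: (@continuousD R R^o (subspace M) (dC (C i)) (dC (C i) \o A) y); [exact: c1|exact: c2].
have [a aK] : exists a, a \in K by apply/card_gt0P.
have [b bK] : exists b, b \notin K.
  have h := cardsC K; rewrite card_ord in h.
  have : (0 < #|~: K|)%N by lia.
  by case/card_gt0P => b; rewrite !inE => bK; exists b.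
have ab : a != b by apply/eqP => eab; move: bK; rewrite -eab aK.
pose S := ~: [set a; b].
have hS : #|S| = d.
  have := cardsC [set a; b]; rewrite cards2 ab card_ord /S /= => h; lia.
pose e (j : 'I_d) : 'I_d.+2 := enum_val (cast_ord (esym hS) j).
pose rep i := if i \in K then a else b.
pose g y := \row_j (phi (e j) y - phi (rep (e j)) y) : 'rV[R]_d.
have gc : {within M, continuous g}.
  rewrite continuous_subspace_in => y; rewrite inE => My.
  by apply: row_cont => j; apply: continuousB; apply: phic.
have [x [Mx gx]] := BU g gc.
have [MAx AAx _] := fi x Mx.
have const : forall i, phi i x = phi (rep i) x.
  move=> i; case: (boolP (i \in S)) => iS.
    pose j := cast_ord hS (enum_rank_in iS i).
    have ej : e j = i by rewrite /e cast_ordK enum_rankK_in.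
    have := congr1 (fun r : 'rV[R]_d => r ord0 j) gx; rewrite !mxE ej !phiA //.
    by move=> h; lra.
  move: iS; rewrite !inE negbK => /orP[]/eqP ->.
    by rewrite /rep aK.
  by rewrite /rep (negbTE bK).
have [j Cjx] := cov x Mx.
have [l Clx] := cov (A x) MAx.
have pj : phi j x = 0 := phi0 _ _ Cjx.
have pl : phi l x = 1 by apply: phi1.
have repK : forall i, i \in K -> rep i = a by move=> i iK; rewrite /rep iK.
have repNK : forall i, i \notin K -> rep i = b by move=> i iK; rewrite /rep (negbTE iK).
case: (boolP (j \in K)) => jK.
  have pa : phi a x = 0 by rewrite -(repK j jK) -const.
  have lK : l \notin K.
    apply/negP => lK; move: pl; rewrite const repK // pa => /eqP.
    by rewrite eq_sym oner_eq0.
  have pb : phi b x = 1 by rewrite -(repNK l lK) -const.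
  exists x; split => // i iK.
    by apply: phi0P; rewrite const repK.
  by apply: phi1P => //; rewrite const repNK.
have pb : phi b x = 0 by rewrite -(repNK j jK) -const.
have lK : l \in K.
  apply/negPn/negP => lK; move: pl; rewrite const repNK // pb => /eqP.
  by rewrite eq_sym oner_eq0.
have pa : phi a x = 1 by rewrite -(repK l lK) -const.
exists (A x); split.
- exact: MAx.
- by move=> i iK; apply: phi1P => //; rewrite const repK.
- by move=> i iK; rewrite AAx; apply: phi0P; rewrite const repNK.
Qed.
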